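(* For all $x\in R(E)$, $u\in R(F,H)$ and $v\in W(F,H)$, \[ x\bullet(uv)=(x\bullet u)v . \]
   Context: Let $f\in\mathbb{C}[H]$ be a polynomial. $R=R(f)$ is the associative $\mathbb{C}$-algebra generated by $E,F,H$ with relations $EF-FE=f(H)$, $HE-EH=E$, $HF-FH=-F$; the monomials $F^iH^jE^k$ form a basis of $R$. $Z(R)$ is the center of $R$. Let $R(E)=\mathbb{C}[E]$ and $R(F,H)$ the subalgebra generated by $F,H$. Fix an algebra homomorphism $\eta:R(E)\to\mathbb{C}$ with $\eta(E)\neq0$ and let $R_\eta(E)=\ker\eta$. Then $R=R(F,H)\oplus R\,R_\eta(E)$ as vector spaces; for $u\in R$, $u^\eta$ denotes its $R(F,H)$-component. $W(F,H)=\{z^\eta: z\in Z(R)\}$. The $\eta$-reduced action of $R(E)$ on $R(F,H)$ is $x\bullet v=(xv)^\eta-\eta(x)v$ for $x\in R(E)$, $v\in R(F,H)$. *)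

(* Defs.v *)
From HB Require Import structures.
From mathcomp Require Import all_boot all_order all_algebra.
From mathcomp Require Import reals complex.
From Stdlib Require Import ClassicalEpsilon.
Set Implicit Arguments. Unset Strict Implicit. Unset Printing Implicit Defensive.
Import Order.TTheory GRing.Theory Num.Theory.
Local Open Scope ring_scope.

Section Defs.
Variables (R : realType) (A : algType R[i]).
Local Notation C := R[i].

Definition peval (p : {poly C}) (x : A) : A :=
  \sum_(k < size p) p`_k *: x ^+ k.

Definition pbw_mono (E F H : A) (i j k : nat) : A := F ^+ i * H ^+ j * E ^+ k.

(* A is (a copy of) R(f): the relations hold and the monomials F^i H^j E^k
   form a C-basis (spanning + linearly independent). *)
Definition is_Rf (f : {poly C}) (E F H : A) : Prop :=
  [/\ E * F - F * E = peval f H,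
      H * E - E * H = E,
      H * F - F * H = - F,
      (forall a : A, exists (n : nat) (c : nat -> nat -> nat -> C),
          a = \sum_(i < n) \sum_(j < n) \sum_(k < n) c i j k *: pbw_mono E F H i j k) &
      (forall (n : nat) (c : nat -> nat -> nat -> C),
          \sum_(i < n) \sum_(j < n) \sum_(k < n) c i j k *: pbw_mono E F H i j k = 0 ->
          forall i j k, (i < n)%N -> (j < n)%N -> (k < n)%N -> c i j k = 0)].

Definition wordFH (F H : A) (s : seq bool) : A :=
  \prod_(b <- s) (if b then F else H).

(* R(F,H): the subalgebra generated by F and H (= linear span of words) *)
Definition inRFH (F H : A) (a : A) : Prop :=
  exists (n : nat) (c : 'I_n -> C) (w : 'I_n -> seq bool),
    a = \sum_(m < n) c m *: wordFH F H (w m).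

(* R(E) = C[E]; eta is determined by lam = eta(E): eta(p(E)) = p(lam).
   R R_eta(E): the left ideal generated by ker eta, i.e. finite sums r * y
   with r in R and y in ker eta. *)
Definition inRReta (lam : C) (E : A) (a : A) : Prop :=
  exists (n : nat) (r : 'I_n -> A) (q : 'I_n -> {poly C}),
    (forall m, (q m).[lam] = 0) /\ a = \sum_(m < n) r m * peval (q m) E.

(* u^eta : the R(F,H)-component of u in R = R(F,H) (+) R R_eta(E) *)
Definition eta_spec (lam : C) (E F H : A) (u w : A) : Prop :=
  inRFH F H w /\ inRReta lam E (u - w).

Definition eta_comp (lam : C) (E F H : A) (u : A) : A :=
  epsilon (inhabits (0 : A)) (eta_spec lam E F H u).

Definition central (z : A) : Prop := forall a : A, a * z = z * a.

Definition inW (lam : C) (E F H : A) (v : A) : Prop :=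
  exists z, central z /\ v = eta_comp lam E F H z.

(* eta-reduced action of x = p(E) in R(E) on v in R(F,H) *)
Definition bullet (lam : C) (E F H : A) (p : {poly C}) (v : A) : A :=
  eta_comp lam E F H (peval p E * v) - p.[lam] *: v.

End Defs.

(* Main.v *)
Require Import Defs.
From HB Require Import structures.
From mathcomp Require Import all_boot all_order all_algebra.
From mathcomp Require Import reals complex.
From Stdlib Require Import ClassicalEpsilon.
Set Implicit Arguments. Unset Strict Implicit. Unset Printing Implicit Defensive.
Import Order.TTheory GRing.Theory Num.Theory.
Local Open Scope ring_scope.

Section Gen.
Variables (R : realType) (A : algType R[i]).
Local Notation C := R[i].

Definition span (T : Type) (g : T -> A) (a : A) :=
  exists s : seq (C * T), a = \sum_(x <- s) x.1 *: g x.2.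

Lemma span0 T (g : T -> A) : span g 0.
Proof. by exists [::]; rewrite big_nil. Qed.

Lemma spanD T (g : T -> A) a b : span g a -> span g b -> span g (a + b).
Proof. by move=> [s ->] [t ->]; exists (s ++ t); rewrite big_cat. Qed.

Lemma spanZ T (g : T -> A) c a : span g a -> span g (c *: a).
Proof.
move=> [s ->]; exists [seq (c * x.1, x.2) | x <- s].
by rewrite big_map scaler_sumr; apply: eq_bigr => x _; rewrite scalerA.
Qed.

Lemma span_gen T (g : T -> A) t : span g (g t).
Proof. by exists [:: (1, t)]; rewrite big_cons big_nil scale1r addr0. Qed.

Lemma span_sum T (g : T -> A) (I : Type) (r : seq I) (P : pred I) (G : I -> A) :
  (forall i, P i -> span g (G i)) -> span g (\sum_(i <- r | P i) G i).
Proof.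
move=> h; apply: (big_ind (span g)); [exact: span0 | exact: spanD | exact: h].
Qed.

Lemma spanN T (g : T -> A) a : span g a -> span g (- a).
Proof. by move=> h; rewrite -scaleN1r; apply: spanZ. Qed.

Lemma spanB T (g : T -> A) a b : span g a -> span g b -> span g (a - b).
Proof. by move=> ha hb; apply: spanD => //; apply: spanN. Qed.

Lemma peval_horner (p : {poly C}) (x : A) : peval p x = horner_alg x p.
Proof.
have -> : horner_alg x p = horner_alg x (\poly_(i < size p) p`_i) by rewrite coefK.
rewrite /peval poly_def linear_sum /=.
apply/eq_bigr => k _.
by by rewrite -mul_polyC rmorphM /= horner_algC rmorphXn /= horner_algX mulr_algl.
Qed.

Lemma horner_root (p : {poly C}) (lam : C) (x : A) :
  root p lam -> exists b, horner_alg x p = b * (x - lam%:A).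
Proof.
move=> /factor_theorem [q ->]; exists (horner_alg x q).
by rewrite rmorphM rmorphB /= horner_algX horner_algC.
Qed.

End Gen.

Section Main.
Variables (R : realType) (A : algType R[i]) (f : {poly R[i]}) (E F H : A) (lam : R[i]).
Local Notation C := R[i].
Hypothesis hRf : is_Rf f E F H.

Definition Id (a : A) := exists b, a = b * (E - lam%:A).

Lemma Id0 : Id 0.
Proof. by exists 0; rewrite mul0r. Qed.
Lemma IdD a b : Id a -> Id b -> Id (a + b).
Proof. by move=> [x ->] [y ->]; exists (x + y); rewrite mulrDl. Qed.
Lemma IdL r a : Id a -> Id (r * a).
Proof. by move=> [x ->]; exists (r * x); rewrite mulrA. Qed.
Lemma IdN a : Id a -> Id (- a).
Proof. by move=> h; rewrite -mulN1r; apply: IdL. Qed.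
Lemma IdB a b : Id a -> Id b -> Id (a - b).
Proof. by move=> ha hb; apply: IdD => //; apply: IdN. Qed.
Lemma Id_sum (I : Type) (r : seq I) (P : pred I) (G : I -> A) :
  (forall i, P i -> Id (G i)) -> Id (\sum_(i <- r | P i) G i).
Proof. by move=> h; apply: (big_ind Id); [exact: Id0 | exact: IdD | exact: h]. Qed.

Lemma RReta_Id a : inRReta lam E a <-> Id a.
Proof.
split.
- move=> [n [r [q [hq ->]]]]; apply: Id_sum => m _; apply: IdL.
  rewrite peval_horner; apply: horner_root; apply/rootP; exact: hq.
- move=> [b ->]; exists 1%N, (fun _ => b), (fun _ => 'X - lam%:P); split.
    by move=> m; rewrite !hornerE subrr.
  by rewrite big_ord1 peval_horner rmorphB /= horner_algX horner_algC.
Qed.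


Definition fh (t : nat * nat) : A := F ^+ t.1 * H ^+ t.2.

Lemma HF : H * F = F * (H - 1).
Proof.
have [_ _ e3 _ _] := hRf.
by rewrite -[H * F](subrK (F * H)) e3 mulrBr mulr1 addrC.
Qed.

Lemma HFn i : H * F ^+ i = F ^+ i * (H - i%:R).
Proof.
elim: i => [|i IH]; first by rewrite expr0 mulr1 mul1r subr0.
rewrite exprSr mulrA IH -!mulrA; congr (_ * _).
rewrite mulrBl HF mulr_natl -mulr_natr -mulrBr -natr1 opprD addrA.
by rewrite [H - 1 - _]addrAC.
Qed.

Lemma wordFH_cat s t : wordFH F H (s ++ t) = wordFH F H s * wordFH F H t.
Proof. by rewrite /wordFH big_cat. Qed.

Lemma wordFH_nseq b n : wordFH F H (nseq n b) = (if b then F else H) ^+ n.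
Proof.
elim: n => [|n IH]; first by rewrite /wordFH big_nil expr0.
by rewrite /= /wordFH big_cons -/(wordFH F H _) IH exprS.
Qed.

Lemma word_fh s : span fh (wordFH F H s).
Proof.
elim: s => [|b s [sq e]].
  have -> : wordFH F H [::] = fh (0%N, 0%N) by rewrite /wordFH big_nil /fh !expr0 mulr1.
  exact: span_gen.
rewrite /wordFH big_cons -/(wordFH F H s) e mulr_sumr.
apply: span_sum => x _; rewrite -scalerAr; apply: spanZ.
case: b.
  have -> : F * fh x.2 = fh (x.2.1.+1, x.2.2) by rewrite /fh mulrA -exprS.
  exact: span_gen.
rewrite /fh mulrA HFn -mulrA mulrBl -exprS mulr_natl mulrBr mulrnAr -scaler_nat.
apply: spanB; last apply: spanZ.
  exact: (span_gen fh (x.2.1, x.2.2.+1)).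
exact: (span_gen fh (x.2.1, x.2.2)).
Qed.

Lemma RFH_fh a : inRFH F H a -> span fh a.
Proof.
by move=> [n [c [w ->]]]; apply: span_sum => m _; apply: spanZ; apply: word_fh.
Qed.

Lemma RFH_span a : inRFH F H a <-> span (wordFH F H) a.
Proof.
split.
  by move=> [n [c [w ->]]]; apply: span_sum => m _; apply: spanZ; apply: span_gen.
move=> [s ->]; exists (size s), (fun m => (nth (0, [::]) s m).1),
  (fun m => (nth (0, [::]) s m).2).
by rewrite (big_nth (0, [::])) big_mkord.
Qed.

Lemma RFH_mul a b : span (wordFH F H) a -> span (wordFH F H) b ->
  span (wordFH F H) (a * b).
Proof.
move=> [s ->] [t ->]; rewrite mulr_suml; apply: span_sum => x _.
rewrite mulr_sumr; apply: span_sum => y _.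
rewrite -scalerAl -scalerAr -wordFH_cat; apply: spanZ; apply: spanZ.
exact: span_gen.
Qed.


Definition T3 := (nat * (nat * nat))%type.
Definition mono3 (t : T3) : A := pbw_mono E F H t.1 t.2.1 t.2.2.
Definition valt n (t : 'I_n * ('I_n * 'I_n)) : T3 := (val t.1, (val t.2.1, val t.2.2)).
Definition coef (s : seq (C * T3)) (t : T3) := \sum_(x <- s | x.2 == t) x.1.
Definition bnd n (t : T3) := [&& (t.1 < n)%N, (t.2.1 < n)%N & (t.2.2 < n)%N].

Lemma coef_cons x s t : coef (x :: s) t = (if x.2 == t then x.1 else 0) + coef s t.
Proof. by rewrite /coef big_cons; case: ifP => _ //; rewrite add0r. Qed.

Lemma conv n (g : T3 -> A) s : all (fun x => bnd n x.2) s ->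
  \sum_(x <- s) x.1 *: g x.2 =
  \sum_(t : 'I_n * ('I_n * 'I_n)) coef s (valt t) *: g (valt t).
Proof.
elim: s => [|x s IH].
  by move=> _; rewrite big_nil; symmetry; apply: big1 => t _; rewrite /coef big_nil scale0r.
move=> /andP [hx hs]; rewrite big_cons IH //.
under [RHS]eq_bigr do rewrite coef_cons scalerDl.
rewrite big_split /=; congr (_ + _).
move: hx; case: x => c [a [b d]] /= /and3P [ha hb hd].
rewrite (bigD1 (Ordinal ha, (Ordinal hb, Ordinal hd))) //= eqxx big1 ?addr0 // => t ht.
case: eqP => e; last by rewrite scale0r.
exfalso; move/eqP: ht; apply; move: e; case: t => [i [j k]] /= [ea eb ed].
by congr (_, (_, _)); apply: val_inj.
Qed.


Lemma key s : \sum_(x <- s) x.1 *: mono3 x.2 = 0 ->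
  \sum_(x <- s) x.1 *: (lam ^+ x.2.2.2 *: fh (x.2.1, x.2.2.1)) = 0.
Proof.
move=> h0.
set n := (\max_(x <- s) (x.2.1 + x.2.2.1 + x.2.2.2)).+1.
have hb : all (fun x => bnd n x.2) s.
  apply/allP => x xs.
  have := @leq_bigmax_seq _ s predT (fun x : C * T3 => x.2.1 + x.2.2.1 + x.2.2.2)%N x xs isT.
  rewrite /bnd /n -/n => hle; apply/and3P; split; rewrite ltnS; apply: leq_trans hle.
  - by rewrite -addnA leq_addr.
  - by rewrite addnAC leq_addl.
  - by rewrite leq_addl.
rewrite (conv (fun t => lam ^+ t.2.2 *: fh (t.1, t.2.1)) hb).
rewrite (conv _ hb) in h0.
have hc : forall t : 'I_n * ('I_n * 'I_n), coef s (valt t) = 0.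
  have [_ _ _ _ hind] := hRf.
  move=> [i [j k]]; apply: (hind n (fun i j k => coef s (i, (j, k)))); rewrite ?ltn_ord //.
  apply: etrans h0.
  under eq_bigr => i' _ do rewrite pair_big /=.
  by rewrite pair_big /=.

by apply: big1 => t _; rewrite hc scale0r.
Qed.


Lemma uniq0 w : span fh w -> Id w -> w = 0.
Proof.
move=> [s1 e1] [b eb].
have [s hs] : span mono3 b.
  have [_ _ _ hsp _] := hRf; have [n [c ->]] := hsp b.
  do 3 (apply: span_sum => ? _); apply: spanZ; exact: (span_gen mono3 (_, (_, _))).
pose S := [seq (x.1, (x.2.1, (x.2.2, 0%N))) | x <- s1] ++
  ([seq (- y.1, (y.2.1, (y.2.2.1, y.2.2.2.+1))) | y <- s] ++
   [seq (y.1 * lam, y.2) | y <- s]).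
have h0 : \sum_(x <- S) x.1 *: mono3 x.2 = 0.
  rewrite !big_cat !big_map /=.
  have -> : \sum_(x <- s1) x.1 *: mono3 (x.2.1, (x.2.2, 0%N)) = w.
    by rewrite e1; apply: eq_bigr => x _; rewrite /mono3 /pbw_mono /fh /= expr0 mulr1.
  have -> : \sum_(y <- s) (- y.1) *: mono3 (y.2.1, (y.2.2.1, y.2.2.2.+1)) = - (b * E).
    rewrite hs mulr_suml -sumrN; apply: eq_bigr => y _.
    by rewrite scaleNr -scalerAl /mono3 /pbw_mono /= exprSr mulrA.
  have -> : \sum_(y <- s) (y.1 * lam) *: mono3 y.2 = lam *: b.
    by rewrite hs scaler_sumr; apply: eq_bigr => y _; rewrite scalerA mulrC.
  by rewrite eb mulrBr mulr_algr addrACA addrN addNr addr0.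
have := key h0; rewrite !big_cat !big_map /=.
rewrite -[X in _ + X]big_split /= [X in _ + X]big1 ?addr0.
  move=> <-; rewrite e1; apply: eq_bigr => x _.
  by rewrite expr0 scale1r /fh.
move=> y _; rewrite !scalerA exprS mulrA.
by rewrite !mulNr scaleNr addNr.
Qed.


Lemma eta_exists a : exists w, eta_spec lam E F H a w.
Proof.
have [_ _ _ hsp _] := hRf; have [n [c ->]] := hsp a.
exists (\sum_(i < n) \sum_(j < n) \sum_(k < n) (c i j k * lam ^+ k) *: (F ^+ i * H ^+ j)).
split.
  apply/RFH_span; do 3 (apply: span_sum => ? _); apply: spanZ.
  rewrite -(wordFH_nseq true) -(wordFH_nseq false) -wordFH_cat; exact: span_gen.
apply/RReta_Id; rewrite -sumrB; apply: Id_sum => i _.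
rewrite -sumrB; apply: Id_sum => j _.
rewrite -sumrB; apply: Id_sum => k _.
have [b hb] : exists b, E ^+ k - (lam ^+ k)%:A = b * (E - lam%:A).
  have := @horner_root _ _ ('X ^+ k - (lam ^+ k)%:P) lam E.
 rewrite rmorphB /= (rmorphXn (horner_alg E)) /= horner_algX horner_algC; apply.
  by rewrite rootE !hornerE subrr.
exists (c i j k *: (F ^+ i * H ^+ j * b)).
rewrite -scalerAl -(mulrA (F ^+ i * H ^+ j)) -hb mulrBr mulr_algr scalerBr scalerA.
by [].
Qed.

Lemma eta_ok a : eta_spec lam E F H a (eta_comp lam E F H a).
Proof. by rewrite /eta_comp; apply: epsilon_spec; apply: eta_exists. Qed.

Lemma eta_uniq a w : eta_spec lam E F H a w -> eta_comp lam E F H a = w.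
Proof.
have [h1 h2] := eta_ok a; move=> [h3 h4].
apply/eqP; rewrite -subr_eq0; apply/eqP; apply: uniq0.
  by apply: spanB; apply: RFH_fh.
have -> : eta_comp lam E F H a - w = (a - w) - (a - eta_comp lam E F H a).
  by rewrite opprB [RHS]addrC addrA subrK.
by apply: IdB; apply/RReta_Id.
Qed.

End Main.


Theorem mainTheorem19 (R : realType) (A : algType R[i]) (f : {poly R[i]})
    (E F H : A) (lam : R[i]) :
  is_Rf f E F H -> lam != 0 ->
  forall (p : {poly R[i]}) (u v : A),
    inRFH F H u -> inW lam E F H v ->
    bullet lam E F H p (u * v) = bullet lam E F H p u * v.
Proof.
move=> hRf _ p u v0 _ [z [hz ->]].
rewrite /bullet.
set P := peval p E; set v := eta_comp lam E F H z.
set w1 := eta_comp lam E F H (P * u).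
have -> : eta_comp lam E F H (P * (u * v)) = w1 * v.
  apply: (eta_uniq hRf).
  have [hw1 hr1] := eta_ok lam hRf (P * u); have [hv hr2] := eta_ok lam hRf z.
  split.
    by apply/RFH_span; apply: RFH_mul; apply/RFH_span.
  move/RReta_Id: hr1 => hr1; move/RReta_Id: hr2 => hr2.
  apply/RReta_Id.
  have -> : P * (u * v) - w1 * v = w1 * (z - v) + z * (P * u - w1) - (P * u) * (z - v).
    rewrite !mulrBr -(hz (P * u)) -(hz w1) mulrA.
    set a1 := w1 * z; set a2 := w1 * v; set a3 := P * u * z; set a4 := P * u * v.
    rewrite opprB (addrC (a1 - a2)) (addrA (a3 - a1) a1) subrK.
    by rewrite (addrC (a3 - a2)) (addrA (a4 - a3) a3) subrK.
  by apply: IdB; [apply: IdD; apply: IdL|apply: IdL].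
by rewrite mulrBl -scalerAl.
Qed.
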